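(* Let $n\geq1$ and $\mu\vdash 2n$. Then for every $\lambda\vdash n$, $$\hat{\phi}^{2\lambda}_{\mu}=\sum_{\tau\vdash n}m(\mu,2\tau)\,\hat{\theta}^{2\lambda}_{2\tau}.$$ Equivalently, writing $\hat{\phi}_\mu=(\hat{\phi}^{2\lambda}_\mu)_{\lambda\vdash n}$ and $m(\mu)=(m(\mu,2\tau))_{\tau\vdash n}$ as column vectors, $\hat{\phi}_\mu=\hat{\Theta}(2n)\,m(\mu)$.
   Context: Let $K_{2n}$ be the complete graph on $\{1,\ldots,2n\}$, ${\cal M}_{2n}$ its set of perfect matchings, and $[i,j]$ the edge joining $i,j$. For $A,B\in{\cal M}_{2n}$, $d(A,B)$ is the partition of $2n$ whose parts are the numbers of vertices of the connected components of the spanning subgraph with edge set $A\cup B$; it has the form $2\mu$ with $\mu\vdash n$. The group $S_{2n}$ acts on ${\cal M}_{2n}$ by relabelling vertices. For $\mu\vdash n$, $N_{2\mu}(A)=\sum_{B:\,d(A,B)=2\mu}B$ defines an element of ${\cal B}_{2n}=\mathrm{End}_{S_{2n}}({\mathbb C}[{\cal M}_{2n}])$. It is known that ${\mathbb C}[{\cal M}_{2n}]\cong\bigoplus_{\lambda\vdash n}V^{2\lambda}$ multiplicity-free, where $V^\nu$ is the irreducible $S_{2n}$-module indexed by $\nu$ and $2\lambda$ doubles the row lengths of $\lambda$. The scalar by which $N_{2\tau}$ acts on $V^{2\lambda}$ is $\hat{\theta}^{2\lambda}_{2\tau}$, and $\hat{\Theta}(2n)=(\hat{\theta}^{2\lambda}_{2\tau})_{\lambda,\tau\vdash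 n}$. For $\nu,\rho\vdash 2n$, $\hat{\phi}^\nu_\rho$ is the scalar by which the class sum of permutations of cycle type $\rho$ acts on $V^\nu$. Let $I=\{[1,n+1],[2,n+2],\ldots,[n,2n]\}$. For $\rho\vdash 2n$ and $\tau\vdash n$, $m(\rho,2\tau)$ is the number of permutations in $S_{2n}$ of cycle type $\rho$ sending $I$ to $A$, where $A\in{\cal M}_{2n}$ is any matching with $d(I,A)=2\tau$; this number does not depend on the choice of such $A$. *)

(* Defs.v *)
From mathcomp Require Import all_boot all_order all_algebra perm algC.
Set Implicit Arguments. Unset Strict Implicit. Unset Printing Implicit Defensive.
Import GRing.Theory Num.Theory.
Local Open Scope ring_scope.

Definition is_partition (n : nat) (s : seq nat) : bool :=
  [&& sorted geq s, all (fun x => 0 < x)%N s & sumn s == n].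

Fixpoint allseq (L m : nat) : seq (seq nat) :=
  [::] :: (if L is L'.+1 then [seq x :: s | x <- iota 0 m, s <- allseq L' m] else [::]).

Definition parts (n : nat) : seq (seq nat) :=
  [seq s <- allseq n n.+1 | is_partition n s].

Definition dbl (s : seq nat) : seq nat := map (fun x => x.*2) s.

Section Matchings.
Variable n : nat.
Notation T := 'I_(n.*2).

Definition is_pm (A : {set {set T}}) : bool :=
  partition A [set: T] && [forall X in A, #|X| == 2].

Definition PM := {A : {set {set T}} | is_pm A}.

Definition mact (s : {perm T}) (A : {set {set T}}) : {set {set T}} :=
  [set [set s x | x in X] | X : {set T} in A].

Definition adjAB (A B : {set {set T}}) : rel T :=
  [rel x y | [exists X in A :|: B, (x \in X) && (y \in X)]].
Definition comps (A B : {set {set T}}) : {set {set T}} :=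
  [set [set y | connect (adjAB A B) x y] | x : T].
Definition dist (A B : {set {set T}}) : seq nat :=
  sort geq [seq #|C| | C : {set T} <- enum (comps A B)].

Definition cycle_type (s : {perm T}) : seq nat :=
  sort geq [seq #|X| | X : {set T} <- enum (porbits s)].

(* I = {[1,n+1],...,[n,2n]} (0-based: {i, i+n}) *)
Definition Imatch : {set {set T}} :=
  [set X : {set T} | [exists x : T, exists y : T, (val y == val x + n)%N && (X == [set x; y])]].

(* m(rho, 2 tau): number of sigma of type rho with sigma(I) = A, where A is
   a (chosen) perfect matching with d(I,A) = 2 tau. *)
Definition mcount (rho tau : seq nat) : nat :=
  match [pick A : {set {set T}} | is_pm A && (dist Imatch A == dbl tau)] with
  | Some A => #|[set s : {perm T} | (cycle_type s == rho) && (mact s Imatch == A)]|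
  | None => 0
  end.

(* C[M_2n] as row vectors indexed by PM; operators act on the right. *)
Definition dimM := #|{: PM}|.

Definition permM (s : {perm T}) : 'M[algC]_dimM :=
  \matrix_(i, j) (mact s (val (enum_val i)) == val (enum_val j))%:R.

Definition classsum (rho : seq nat) : 'M[algC]_dimM :=
  \sum_(s : {perm T} | cycle_type s == rho) permM s.

Definition Nop (tau : seq nat) : 'M[algC]_dimM :=
  \matrix_(i, j) (dist (val (enum_val i)) (val (enum_val j)) == dbl tau)%:R.

Definition invariant (W : 'M[algC]_dimM) : Prop :=
  forall s : {perm T}, (W *m permM s <= W)%MS.

Definition irr_submod (W : 'M[algC]_dimM) : Prop :=
  W != 0 /\ invariant W /\
  forall U : 'M[algC]_dimM, (U <= W)%MS -> invariant U -> U = 0 \/ (U == W)%MS.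

End Matchings.

(* Main.v *)
Require Import Defs.
From mathcomp Require Import all_boot all_order all_algebra perm algC zify.
Import GRing.Theory Num.Theory.
Set Implicit Arguments. Unset Strict Implicit. Unset Printing Implicit Defensive.


Section PM.
Variable T : finType.

Definition pmf (f : T -> T) : {set {set T}} := [set [set x; f x] | x : T].

Definition ispm (A : {set {set T}}) : bool :=
  partition A [set: T] && [forall X in A, #|X| == 2].

Section Inv.
Variable a : T -> T.
Hypothesis aK : involutive a.
Hypothesis afp : forall x, a x != x.

Lemma pmf_block x z : z \in [set x; a x] -> [set x; a x] = [set z; a z].
Proof.
case/set2P=> -> //; rewrite aK; apply/setP=> y; rewrite !inE orbC //.
Qed.

Lemma pmf_pm : ispm (pmf a).
Proof.
apply/andP; split; last first.
  by apply/forall_inP=> _ /imsetP[x _ ->]; rewrite cards2 (eq_sym x) afp.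
apply/and3P; split.
- apply/eqP/setP=> y; rewrite inE; apply/bigcupP; exists [set y; a y].
    exact: imset_f. exact: set21.
- apply/trivIsetP=> _ _ /imsetP[x _ ->] /imsetP[y _ ->] ne.
  rewrite -setI_eq0; apply/eqP/setP=> z; rewrite [in RHS]inE in_setI.
  apply/negP=> /andP[zx zy]; move: ne.
  by rewrite (pmf_block zx) (pmf_block zy) eqxx.
- apply/imsetP=> -[x _] /setP/(_ x); rewrite inE set21.
  done.
Qed.
End Inv.

Definition partner (A : {set {set T}}) x := odflt x [pick y | (y != x) && ([set x; y] \in A)].

Section Part.
Variable A : {set {set T}}.
Hypothesis pmA : ispm A.

Lemma pm_triv X Y x : X \in A -> Y \in A -> x \in X -> x \in Y -> X = Y.
Proof.
case/andP: pmA => /and3P[_ tA _] _ XA YA xX xY.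
apply/eqP; apply: contraT => ne.
have := trivIsetP tA X Y XA YA ne; rewrite -setI_eq0 => /eqP/setP/(_ x).
by rewrite !inE xX xY.
Qed.

Lemma pm_exists x : exists y, (y != x) && ([set x; y] \in A).
Proof.
case/andP: pmA => /and3P[/eqP cA _ _] /forall_inP c2.
have : x \in cover A by rewrite cA inE.
case/bigcupP=> X XA xX; have /cards2P[u [v [uv eX]]] := c2 X XA.
move: xX; rewrite eX => /set2P[] ->.
  by exists v; rewrite eq_sym uv -eX XA.
by exists u; rewrite uv setUC -eX XA.
Qed.

Lemma partnerP x : (partner A x != x) && ([set x; partner A x] \in A).
Proof.
rewrite /partner; case: pickP => [y -> //|H].
by have [y Hy] := pm_exists x; rewrite H in Hy.
Qed.

Lemma pm_uniq x y z : [set x; y] \in A -> [set x; z] \in A -> y != x -> y = z.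
Proof.
move=> xy xz yx; have E := pm_triv xy xz (set21 _ _) (set21 _ _).
by move: (set22 x y); rewrite E => /set2P[/eqP|]; rewrite ?(negbTE yx).
Qed.

Lemma partnerK : involutive (partner A).
Proof.
move=> x; case/andP: (partnerP x) => px pxA.
case/andP: (partnerP (partner A x)) => ppx ppxA.
apply/esym/(pm_uniq (x := partner A x)) => //; first by rewrite setUC.
by rewrite eq_sym.
Qed.

Lemma partner_fp x : partner A x != x.
Proof. by case/andP: (partnerP x). Qed.

Lemma pm_pmf : A = pmf (partner A).
Proof.
case/andP: pmA => _ /forall_inP c2.
apply/setP=> X; apply/idP/imsetP=> [XA|[x _ ->]]; last by case/andP: (partnerP x).
have /cards2P[u [v [uv eX]]] := c2 X XA; exists u => //.
case/andP: (partnerP u) => pu puA.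
by rewrite eX (@pm_uniq u v (partner A u)) // -?eX // eq_sym.
Qed.
End Part.

Lemma pm_inv A : ispm A -> exists a, [/\ involutive a, forall x, a x != x & A = pmf a].
Proof.
move=> pmA; exists (partner A); split.
exact: partnerK. exact: partner_fp. exact: pm_pmf.
Qed.
End PM.

Section Pair.
Variable T : finType.
Definition adjG (A B : {set {set T}}) : rel T :=
  [rel x y | [exists X in A :|: B, (x \in X) && (y \in X)]].
Definition compsG (A B : {set {set T}}) : {set {set T}} :=
  [set [set y | connect (adjG A B) x y] | x : T].
Definition distG (A B : {set {set T}}) : seq nat :=
  sort geq [seq #|C| | C : {set T} <- enum (compsG A B)].

Variables a b : T -> T.
Hypotheses (aK : involutive a) (bK : involutive b).
Hypotheses (afp : forall x, a x != x) (bfp : forall x, b x != x).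

Definition rr x := a (b x).
Lemma rinj : injective rr.
Proof. by rewrite /rr => x y /(inv_inj aK)/(inv_inj bK). Qed.

Lemma pmf_mem (f : T -> T) x : [set x; f x] \in pmf f.
Proof. exact: (@imset_f _ _ (fun x => [set x; f x])). Qed.

Lemma adjE x y : adjG (pmf a) (pmf b) x y = [|| y == x, y == a x | y == b x].
Proof.
apply/existsP/idP=> [[X /andP[]]|].
  rewrite inE => /orP[]/imsetP[z _ ->] /andP[xX yX].
    by move: yX; rewrite (pmf_block aK xX) => /set2P[]->; rewrite eqxx ?orbT.
  by move: yX; rewrite (pmf_block bK xX) => /set2P[]->; rewrite eqxx ?orbT.
case/or3P=> /eqP->.
- by exists [set x; a x]; rewrite in_setU pmf_mem ?set21.
- by exists [set x; a x]; rewrite in_setU pmf_mem ?set21 ?set22.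
- by exists [set x; b x]; rewrite in_setU orbC pmf_mem ?set21 ?set22.
Qed.

Lemma adj_sym : symmetric (adjG (pmf a) (pmf b)).
Proof.
move=> x y; rewrite !adjE (eq_sym x y).
have Ea: (y == a x) = (x == a y) by apply/eqP/eqP=> ->; rewrite aK.
have Eb: (y == b x) = (x == b y) by apply/eqP/eqP=> ->; rewrite bK.
by rewrite Ea Eb.
Qed.

Lemma rar m v : iter m rr (a (iter m rr v)) = a v.
Proof.
elim: m v => [//|m IH] v.
rewrite (iterS m rr v) (iterSr m rr).
have -> : rr (a (rr (iter m rr v))) = a (iter m rr v).
  by rewrite /rr aK bK.
exact: IH.
Qed.

Lemma iter_inj m : injective (iter m rr).
Proof. elim: m => //= m IH x y /rinj; exact: IH. Qed.

Lemma notboth x y : fconnect rr x y -> fconnect rr x (a y) -> False.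
Proof.
move=> xy xay.
have : fconnect rr y (a y).
  by apply: connect_trans xay; rewrite (fconnect_sym rinj).
move/iter_findex; set m := findex _ _ _ => Em.
have Hm := odd_double_half m; set t := m./2 in Hm.
have R := rar t y; set w := iter t rr y in R.
case: (odd m) Hm => /= Hm.
  have : iter t rr (a w) = iter t rr (rr w).
    have E2 : m = t + t.+1 by rewrite -Hm addnS addnn.
    by rewrite R -Em E2 iterD iterS.
  by move/iter_inj; rewrite /rr => /(inv_inj aK) /esym; apply/eqP; rewrite bfp.
have : iter t rr (a w) = iter t rr w.
  have E2 : m = t + t by rewrite -Hm addnn.
  by rewrite R -Em E2 iterD.
by move/iter_inj/eqP; rewrite (negbTE (afp w)).
Qed.

Local Notation adj := (adjG (pmf a) (pmf b)).

Lemma fc_conn u v : fconnect rr u v -> connect adj u v.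
Proof.
case/connectP=> p pth ->; elim: p u pth => [|z p IH] u /=; first by rewrite connect0.
case/andP=> /eqP <- pth; apply: connect_trans (IH _ pth).
apply: (connect_trans (y := b u)); apply: connect1; rewrite adjE eqxx ?orbT //.
Qed.

Lemma connectE x y : connect adj x y = fconnect rr x y || fconnect rr x (a y).
Proof.
apply/idP/idP.
- case/connectP=> p pth ->.
  suff H: forall p u, path adj u p -> (fconnect rr x u || fconnect rr x (a u)) ->
      fconnect rr x (last u p) || fconnect rr x (a (last u p)).
    by apply: H pth _; rewrite connect0.
  elim=> // z q IH u /= /andP[uz qth] Hu; apply: IH qth _.
  move: uz; rewrite adjE => /or3P[]/eqP->.
  + done.
  + by rewrite aK orbC.
  + case/orP: Hu => Hu; apply/orP; [right|left].
      by apply: connect_trans Hu (fconnect1 rr u).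
    by rewrite (same_fconnect1_r rinj) /rr bK.
- case/orP=> H; first exact: fc_conn.
  apply: connect_trans (fc_conn H) _; apply: connect1; rewrite adjE aK eqxx ?orbT //.
Qed.

Definition compG x := [set y | connect adj x y].

Lemma compE x : compG x = [set y | fconnect rr x y || fconnect rr x (a y)].
Proof. by apply/setP=> y; rewrite !inE connectE. Qed.

Lemma conn_sym : connect_sym adj.
Proof. exact: sym_connect_sym adj_sym. Qed.

Lemma comp_same x y : y \in compG x -> compG y = compG x.
Proof.
rewrite inE => xy; apply/setP=> z; rewrite !inE.
by rewrite (same_connect conn_sym xy).
Qed.

Lemma comp_id x : x \in compG x.
Proof. by rewrite inE connect0. Qed.

Lemma comp_a x y : y \in compG x -> a y \in compG x.
Proof.
rewrite !inE => H; apply: connect_trans H (connect1 _).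
by rewrite adjE eqxx orbT.
Qed.

Lemma comp_r x y : y \in compG x -> rr y \in compG x.
Proof.
rewrite !inE => H; apply: connect_trans H _.
apply: (connect_trans (y := b y)); apply: connect1; rewrite adjE eqxx ?orbT //.
Qed.

Lemma cardS x : #|compG x| = (order rr x).*2.
Proof.
rewrite compE.
set F := [set y | fconnect rr x y].
have E : [set y | fconnect rr x y || fconnect rr x (a y)] = F :|: a @: F.
  apply/setP=> y; rewrite !inE; congr orb; apply/idP/imsetP.
    by move=> H; exists (a y); rewrite ?inE ?aK.
  by case=> z; rewrite inE => zF ->; rewrite aK.
have D : F :&: a @: F = set0.
  apply/setP=> y; rewrite !inE; apply/negP=> /andP[H1 /imsetP[z]].
  rewrite inE => H2 Ey; apply: (notboth H1); by rewrite Ey aK.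
rewrite E cardsU card_imset; last exact: (inv_inj aK).
have -> : #|F| = order rr x by apply: eq_card => y; rewrite inE.
by rewrite D cards0 subn0 addnn.
Qed.


Definition bsC (C : {set T}) (d : T) := odflt d [pick z in C].

Lemma bsC_in (C : {set T}) (d e : T) : e \in C -> bsC C d \in C.
Proof. by rewrite /bsC; case: pickP => [z //|H]; rewrite H. Qed.

Lemma bsC_eq (C : {set T}) (d1 d2 e : T) : e \in C -> bsC C d1 = bsC C d2.
Proof. by rewrite /bsC; case: pickP => [z //|H]; rewrite H. Qed.

Definition bs y := bsC (compG y) y.
Definition ey y := ~~ fconnect rr (bs y) y.
Definition iy y := findex rr (bs y) (if ey y then a y else y).
Definition dec (f g : T -> T) x (e : bool) i := (if e then f else id) (iter i g x).

Lemma bs_in y : bs y \in compG y.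
Proof. exact: bsC_in (comp_id y). Qed.

Lemma bs_comp y : compG (bs y) = compG y.
Proof. exact: comp_same (bs_in y). Qed.

Lemma bs_eq y z : compG y = compG z -> bs y = bs z.
Proof. by rewrite /bs => E; rewrite E; apply: bsC_eq (comp_id z). Qed.

Lemma coord y : y = dec a rr (bs y) (ey y) (iy y) /\ iy y < order rr (bs y).
Proof.
have : y \in compG (bs y) by rewrite bs_comp comp_id.
rewrite compE inE /dec /iy /ey.
case: (boolP (fconnect rr (bs y) y)) => /= [H _|_ H].
  by rewrite iter_findex ?findex_max.
by rewrite iter_findex ?findex_max ?aK.
Qed.

Lemma dec_fc x i : fconnect rr x (iter i rr x).
Proof. exact: fconnect_iter. Qed.

Lemma dec_uniq x e1 i1 e2 i2 : i1 < order rr x -> i2 < order rr x ->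
  dec a rr x e1 i1 = dec a rr x e2 i2 -> e1 = e2 /\ i1 = i2.
Proof.
move=> h1 h2; rewrite /dec.
have F: forall j1 j2, j1 < order rr x -> j2 < order rr x ->
    iter j1 rr x = iter j2 rr x -> j1 = j2.
  by move=> j1 j2 k1 k2 E; rewrite -(findex_iter k1) E findex_iter.
case: e1; case: e2 => /= E.
- by split => //; apply: F h1 h2 (inv_inj aK E).
- by exfalso; apply: (notboth (dec_fc x i1)); rewrite E dec_fc.
- by exfalso; apply: (notboth (dec_fc x i2)); rewrite -E dec_fc.
- by split => //; apply: F h1 h2 E.
Qed.

Lemma coord_uniq y e i : i < order rr (bs y) -> y = dec a rr (bs y) e i ->
  e = ey y /\ i = iy y.
Proof.
move=> hi E; have [E2 h2] := coord y.
by apply: dec_uniq hi h2 _; rewrite -E -E2.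
Qed.

Lemma iter_order_mul q x : iter (q * order rr x) rr x = x.
Proof.
elim: q => [//|q IH]; rewrite mulSn iterD IH.
exact: (iter_order rinj).
Qed.

Lemma iter_mod m x : iter m rr x = iter (m %% order rr x) rr x.
Proof.
by rewrite {1}(divn_eq m (order rr x)) addnC iterD iter_order_mul.
Qed.

Lemma iter_eq_mod p q x :
  (iter p rr x = iter q rr x) <-> (p %% order rr x = q %% order rr x).
Proof.
have k0 := order_gt0 rr x.
split=> [E|E]; last by rewrite iter_mod E -iter_mod.
move: E; rewrite (iter_mod p) (iter_mod q) => E.
by rewrite -(findex_iter (ltn_pmod p k0)) E findex_iter ?ltn_pmod.
Qed.


Lemma bs_a y : bs (a y) = bs y.
Proof. by apply: bs_eq; apply: comp_same; apply: comp_a (comp_id y). Qed.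

Lemma bs_r y : bs (rr y) = bs y.
Proof. by apply: bs_eq; apply: comp_same; apply: comp_r (comp_id y). Qed.

Lemma coord_a y : ey (a y) = ~~ ey y /\ iy (a y) = iy y.
Proof.
have [E h] := coord y.
have [] := @coord_uniq (a y) (~~ ey y) (iy y); rewrite ?bs_a //.
  by rewrite {1}E /dec; case: (ey y) => //=; rewrite aK.
Qed.

Lemma coord_r y (k := order rr (bs y)) :
  (ey y = false -> ey (rr y) = false /\ iy (rr y) = (iy y).+1 %% k) /\
  (ey y = true -> ey (rr y) = true /\ iy (rr y) = (iy y + k.-1) %% k).
Proof.
have [E h] := coord y; have k0 : 0 < k by apply: order_gt0.
split=> e.
  have P1 : (iy y).+1 %% k < order rr (bs (rr y)) by rewrite bs_r ltn_pmod.
  have P2 : rr y = dec a rr (bs (rr y)) false ((iy y).+1 %% k).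
    by rewrite bs_r {1}E e /dec /= -iterS -iter_mod.
  by have [<- <-] := coord_uniq P1 P2.
have P1 : (iy y + k.-1) %% k < order rr (bs (rr y)) by rewrite bs_r ltn_pmod.
have P2 : rr y = dec a rr (bs (rr y)) true ((iy y + k.-1) %% k).
  rewrite bs_r {1}E e /dec /=.
  have -> : iter (iy y) rr (bs y) = iter ((iy y + k.-1) %% k).+1 rr (bs y).
    apply/iter_eq_mod; rewrite -/k -addn1 modnDml -addnA addn1 prednK //.
    by rewrite modnDr modn_small.
  by rewrite iterS /rr aK bK.
by have [<- <-] := coord_uniq P1 P2.
Qed.

End Pair.

Section Trans.
Variable T : finType.
Variables a b a' b' : T -> T.
Hypotheses (aK : involutive a) (bK : involutive b).
Hypotheses (afp : forall x, a x != x) (bfp : forall x, b x != x).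
Hypotheses (aK' : involutive a') (bK' : involutive b').
Hypotheses (afp' : forall x, a' x != x) (bfp' : forall x, b' x != x).
Hypothesis hd : distG (pmf a) (pmf b) = distG (pmf a') (pmf b').

Local Notation comp := (compG a b).
Local Notation comp' := (compG a' b').
Local Notation r := (rr a b).
Local Notation r' := (rr a' b').

Let L := sort (relpre (fun C : {set T} => #|C|) geq) (enum (compsG (pmf a) (pmf b))).
Let L' := sort (relpre (fun C : {set T} => #|C|) geq) (enum (compsG (pmf a') (pmf b'))).

Let mapL : [seq #|C| | C : {set T} <- L] = [seq #|C| | C : {set T} <- L'].
Proof. by rewrite /L /L' -!sort_map. Qed.

Let sizeL : size L' = size L.
Proof. by rewrite -(size_map (fun C : {set T} => #|C|) L) mapL size_map. Qed.

Let uniqL' : uniq L'.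
Proof. by rewrite sort_uniq enum_uniq. Qed.

Let compL y : comp y \in L.
Proof. by rewrite mem_sort mem_enum; apply: imset_f. Qed.

Let jj y := index (comp y) L.
Let xx y := bsC (nth set0 L' (jj y)) y.

Let jj_lt y : jj y < size L.
Proof. by rewrite /jj index_mem. Qed.

Let nthL y : nth set0 L (jj y) = comp y.
Proof. by rewrite nth_index. Qed.

Let xx_spec y : comp' (xx y) = nth set0 L' (jj y).
Proof.
have : nth set0 L' (jj y) \in L' by rewrite mem_nth // sizeL.
rewrite mem_sort mem_enum => /imsetP[w _ Ew].
by rewrite /xx Ew; apply: (comp_same aK' bK'); apply: (bsC_in _ (comp_id _ _ w)).
Qed.

Let xx_comp y z : comp y = comp z -> xx y = xx z.
Proof.
move=> E; rewrite /xx /jj E; apply: (bsC_eq _ _ (e := xx z)).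
by rewrite -xx_spec comp_id.
Qed.

Let ord_xx y : order r' (xx y) = order r (bs a b y).
Proof.
apply: double_inj; rewrite -(cardS aK bK afp bfp) -(cardS aK' bK' afp' bfp') xx_spec (bs_comp aK bK).
have := congr1 (nth 0 ^~ (jj y)) mapL.
by rewrite !(nth_map set0) ?sizeL // nthL => <-.
Qed.

Definition gg y := dec a' r' (xx y) (ey a b y) (iy a b y).

Let g_a y : gg (a y) = a' (gg y).
Proof.
have Ec : comp (a y) = comp y by apply: (comp_same aK bK); exact: (comp_a aK bK (comp_id a b y)).
have [E1 E2] := coord_a aK bK afp bfp y.
rewrite /gg (xx_comp Ec) E1 E2 /dec; case: (ey a b y) => //=; rewrite aK'.
Qed.

Let g_r y : gg (r y) = r' (gg y).
Proof.
have Ec : comp (r y) = comp y by apply: (comp_same aK bK); exact: (comp_r aK bK (comp_id a b y)).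
have [H1 H2] := coord_r aK bK afp bfp y.
have [_ hi] := coord aK bK y.
rewrite /gg (xx_comp Ec) /dec.
set k := order r (bs a b y) in H1 H2 hi.
have k0 : 0 < k by apply: order_gt0.
have ok : order r' (xx y) = k by rewrite ord_xx.
case E: (ey a b y).
  have [-> ->] := H2 E => /=.
  have -> : iter (iy a b y) r' (xx y) = iter ((iy a b y + k.-1) %% k).+1 r' (xx y).
    apply/(iter_eq_mod aK' bK'); rewrite ok -addn1 modnDml -addnA addn1 prednK //.
    by rewrite modnDr modn_small.
  by rewrite iterS /rr aK' bK'.
have [-> ->] := H1 E => /=.
by rewrite -ok -(iter_mod aK' bK') iterS.
Qed.

Let g_b y : gg (b y) = b' (gg y).
Proof.
have -> : b y = a (r y) by rewrite /rr aK.
by rewrite g_a g_r /rr aK'.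
Qed.

Let gg_comp y : gg y \in comp' (xx y).
Proof.
rewrite /gg /dec.
have H : iter (iy a b y) r' (xx y) \in comp' (xx y).
  elim: (iy a b y) => [|i IH]; first exact: comp_id.
  by rewrite iterS; apply: (comp_r aK' bK').
by case: (ey a b y) => //=; apply: (comp_a aK' bK').
Qed.

Lemma gg_inj : injective gg.
Proof.
move=> y1 y2 E.
have Ej : jj y1 = jj y2.
  have E1 : comp' (gg y1) = nth set0 L' (jj y1) by rewrite -xx_spec; apply: (comp_same aK' bK').
  have E2 : comp' (gg y2) = nth set0 L' (jj y2) by rewrite -xx_spec; apply: (comp_same aK' bK').
  by apply/eqP; rewrite -(nth_uniq set0 _ _ uniqL') ?sizeL // -E1 -E2 E.
have Ec : comp y1 = comp y2 by rewrite -!nthL Ej.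
have Ex := xx_comp Ec.
have Eb := bs_eq Ec.
have [C1 h1] := coord aK bK y1.
have [C2 h2] := coord aK bK y2.
move: E; rewrite /gg Ex => /(dec_uniq aK' bK' afp' bfp').
rewrite Eb in h1; rewrite !ord_xx => /(_ h1 h2) [F1 F2].
by rewrite C1 C2 F1 F2 Eb.
Qed.

Lemma trans_pair : exists G : {perm T},
  (forall x, G (a x) = a' (G x)) /\ (forall x, G (b x) = b' (G x)).
Proof.
exists (perm gg_inj); split=> x; rewrite !permE; [exact: g_a | exact: g_b].
Qed.
End Trans.

Section Gen.
Variable T : finType.

Lemma geq_total : total geq.
Proof. by move=> x y; rewrite leq_total. Qed.
Lemma geq_trans : transitive geq.
Proof. by move=> x y z h1 h2; apply: leq_trans h2 h1. Qed.
Lemma geq_anti : antisymmetric geq.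
Proof. by move=> x y /andP[h1 h2]; apply/eqP; rewrite eqn_leq; apply/andP. Qed.

Lemma sort_card_imset (G : {perm T}) (P : {set {set T}}) :
  sort geq [seq #|X| | X : {set T} <- enum [set G @: X | X : {set T} in P]] =
  sort geq [seq #|X| | X : {set T} <- enum P].
Proof.
apply/(perm_sortP geq_total geq_trans geq_anti).
have -> : [seq #|X| | X : {set T} <- enum P] =
          [seq #|X| | X : {set T} <- map (fun X : {set T} => G @: X) (enum P)].
  by rewrite -map_comp; apply: eq_map => X /=; rewrite card_imset //; apply: perm_inj.
apply: perm_map; apply: uniq_perm; rewrite ?enum_uniq //.
  rewrite map_inj_uniq ?enum_uniq //; apply: imset_inj; apply: perm_inj.
move=> X; rewrite mem_enum; apply/imsetP/mapP => -[Y]; rewrite ?mem_enum => YP ->;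
by exists Y; rewrite ?mem_enum.
Qed.

Lemma conn_iso (e e' : rel T) (G : {perm T}) :
  (forall u v, e' (G u) (G v) = e u v) -> forall u v, connect e' (G u) (G v) = connect e u v.
Proof.
have H: forall (e e' : rel T) (G : {perm T}), (forall u v, e' (G u) (G v) = e u v) ->
    forall u v, connect e u v -> connect e' (G u) (G v).
  move=> e1 e2 G1 He u v /connectP[p pth ->]; apply/connectP.
  exists (map G1 p); last by rewrite last_map.
  by elim: p u pth => //= z p IH u /andP[h1 h2]; rewrite He h1 IH.
move=> He u v; apply/idP/idP; last exact: H.
have He' : forall u v, e ((G^-1)%g u) ((G^-1)%g v) = e' u v.
  by move=> u1 v1; rewrite -He !permKV.
by move/(H _ _ _ He'); rewrite !permK.
Qed.

Lemma imset_reindex (U : finType) (F : T -> U) (G : {perm T}) :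
  [set F x | x : T] = [set F (G x) | x : T].
Proof.
apply/setP=> X; apply/imsetP/imsetP=> -[x _ ->]; last by exists (G x).
by exists ((G^-1)%g x); rewrite ?permKV.
Qed.

End Gen.

Section Mat.
Variable n : nat.
Local Notation T := 'I_(n.*2).

Lemma mact_pmf (G : {perm T}) (a a' : T -> T) :
  (forall x, G (a x) = a' (G x)) -> mact G (pmf a) = pmf a'.
Proof.
move=> H; rewrite /mact /pmf -imset_comp [RHS](imset_reindex _ G).
apply: eq_imset => x /=; apply/setP=> y; rewrite [in RHS]in_set2.
apply/imsetP/idP=> [[z zin ->]|].
  by move: zin; rewrite in_set2 => /orP[]/eqP->; rewrite ?H eqxx ?orbT.
by case/orP=> /eqP->; [exists x | exists (a x)]; rewrite ?H // in_set2 eqxx ?orbT.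
Qed.

Lemma mactM (s t : {perm T}) A : mact (s * t : {perm T})%g A = mact t (mact s A).
Proof.
rewrite /mact -imset_comp; apply: eq_imset => X /=.
by rewrite -imset_comp; apply: eq_imset => x; rewrite permM.
Qed.

Lemma mact1 A : mact (1 : {perm T})%g A = A.
Proof.
rewrite /mact -[RHS]imset_id; apply: eq_imset => X.
by rewrite imset_perm1.
Qed.

Lemma mactK (G : {perm T}) A : mact (G^-1)%g (mact G A) = A.
Proof. by rewrite -mactM mulgV mact1. Qed.

Lemma adj_mact (G : {perm T}) A B u v :
  adjAB (mact G A) (mact G B) (G u) (G v) = adjAB A B u v.
Proof.
rewrite /adjAB /= /mact -imsetU.
apply/existsP/existsP=> [[X /andP[/imsetP[Y YC ->]]]|[Y /andP[YC H]]].
  by rewrite !mem_imset; [exists Y; rewrite YC | apply: perm_inj..].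
by exists (G @: Y); rewrite imset_f // !mem_imset //; apply: perm_inj.
Qed.

Lemma comps_mact (G : {perm T}) A B :
  comps (mact G A) (mact G B) = [set G @: C | C : {set T} in comps A B].
Proof.
rewrite /comps (imset_reindex _ G) -imset_comp; apply: eq_imset => x /=.
apply/setP=> y; rewrite -[y](permKV G) mem_imset ?inE; last exact: perm_inj.
by rewrite (conn_iso (adj_mact G A B)).
Qed.

Lemma dist_mact (G : {perm T}) A B : dist (mact G A) (mact G B) = dist A B.
Proof. by rewrite /dist comps_mact sort_card_imset. Qed.

Lemma porbit_conj (s G : {perm T}) x : porbit (s ^ G)%g (G x) = G @: porbit s x.
Proof.
apply/setP=> y; rewrite -[y](permKV G) mem_imset; last exact: perm_inj.
apply/porbitP/porbitP=> -[i Ei]; exists i.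
  by move: Ei; rewrite -conjXg permJ => /perm_inj.
by rewrite -conjXg permJ Ei.
Qed.

Lemma cycle_type_conj (s G : {perm T}) : cycle_type (s ^ G)%g = cycle_type s.
Proof.
rewrite /cycle_type /porbits (imset_reindex _ G).
have -> : [set porbit (s ^ G)%g (G x) | x : T] = [set G @: X | X : {set T} in porbit s @: T].
  by rewrite -imset_comp; apply: eq_imset => x; rewrite /= porbit_conj.
by rewrite sort_card_imset.
Qed.

Definition cnt (mu : seq nat) A B :=
  #|[set s : {perm T} | (cycle_type s == mu) && (mact s A == B)]|.

Lemma cnt_le mu (G : {perm T}) A B :
  cnt mu A B <= cnt mu (mact G A) (mact G B).
Proof.
rewrite /cnt -(card_imset _ (conjg_inj G)); apply: subset_leq_card.
apply/subsetP=> X /imsetP[s]; rewrite !inE => /andP[/eqP cs /eqP ms] ->.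
rewrite cycle_type_conj cs eqxx /=.
by rewrite /conjg !mactM mactK ms.
Qed.

Lemma cnt_mact mu (G : {perm T}) A B : cnt mu (mact G A) (mact G B) = cnt mu A B.
Proof.
apply/eqP; rewrite eqn_leq cnt_le andbT.
by have := cnt_le mu (G^-1)%g (mact G A) (mact G B); rewrite !mactK.
Qed.

End Mat.

Section Seqs.

Lemma mem_allseq L m s : size s <= L -> all (fun x => x < m) s -> s \in allseq L m.
Proof.
elim: L s => [|L IH] [|x s] //= hs /andP[hx hall].
rewrite in_cons /=; apply: (allpairs_f (fun x s => x :: s)).
  by rewrite mem_iota.
exact: IH.
Qed.

Lemma allseq_uniq L m : uniq (allseq L m).
Proof.
elim: L => [|L IH] //=; apply/andP; split.
  by apply/negP=> /allpairsP[[x s] [_ _]].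
apply: allpairs_uniq; rewrite ?iota_uniq //.
by move=> [x1 s1] [x2 s2] _ _ /= [-> ->].
Qed.

Lemma parts_uniq n : uniq (parts n).
Proof. exact/filter_uniq/allseq_uniq. Qed.

Lemma sumn_dbl s : sumn (dbl s) = (sumn s).*2.
Proof. by elim: s => //= x s IH; rewrite IH doubleD. Qed.

Lemma size_sumn s : all (fun x => 0 < x) s -> size s <= sumn s.
Proof. elim: s => //= x s IH /andP[hx /IH]; lia. Qed.

Lemma leq_sumn s x : x \in s -> x <= sumn s.
Proof.
elim: s => //= y s IH; rewrite in_cons => /orP[/eqP->|/IH]; lia.
Qed.

Lemma dbl_inj : injective dbl.
Proof. apply: inj_map; exact: double_inj. Qed.

Lemma to_parts n d : sorted geq d -> sumn d = n.*2 ->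
  (forall c, c \in d -> exists2 k, 0 < k & c = k.*2) ->
  exists2 tau, tau \in parts n & dbl tau = d.
Proof.
move=> sd sm ev; exists (map half d); last first.
  rewrite /dbl -map_comp -[RHS]map_id; apply/eq_in_map => c /ev [k _ ->] /=.
  by rewrite doubleK.
have dE : dbl (map half d) = d.
  rewrite /dbl -map_comp -[RHS]map_id; apply/eq_in_map => c /ev [k _ ->] /=.
  by rewrite doubleK.
have pos : all (fun x => 0 < x) (map half d).
  by apply/allP=> _ /mapP[c /ev [k k0 ->] ->]; rewrite doubleK.
have sumt : sumn (map half d) = n.
  by apply: double_inj; rewrite -sumn_dbl dE.
rewrite mem_filter; apply/andP; split.
  apply/and3P; split => //; last by rewrite sumt.
  rewrite sorted_map; apply: sub_sorted sd => x y /=; exact: half_leq.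
apply: mem_allseq; first by rewrite -sumt size_sumn.
by apply/allP=> x /leq_sumn; rewrite sumt ltnS.
Qed.

End Seqs.

Section PMn.
Variable n : nat.
Local Notation T := 'I_(n.*2).

Lemma pm_trans (A B A' B' : {set {set T}}) :
  is_pm A -> is_pm B -> is_pm A' -> is_pm B' -> dist A B = dist A' B' ->
  exists G : {perm T}, mact G A = A' /\ mact G B = B'.
Proof.
move=> /pm_inv [a [aK afp ->]] /pm_inv [b [bK bfp ->]].
move=> /pm_inv [a' [aK' afp' ->]] /pm_inv [b' [bK' bfp' ->]] hd.
have [G [Ga Gb]] := trans_pair aK bK afp bfp aK' bK' afp' bfp' hd.
by exists G; rewrite !(mact_pmf Ga, mact_pmf Gb).
Qed.

Lemma comps_part (a b : T -> T) : involutive a -> involutive b ->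
  partition (comps (pmf a) (pmf b)) [set: T].
Proof.
move=> aK bK.
have -> : comps (pmf a) (pmf b) =
    equivalence_partition (connect (adjAB (pmf a) (pmf b))) [set: T].
  apply/setP=> X; apply/imsetP/imsetP=> -[x _ ->]; exists x; rewrite ?inE //;
  by apply/setP=> y; rewrite !inE.
apply: equivalence_partitionP => x y z _ _ _; split; first exact: connect0.
by move=> xy; apply: (same_connect (conn_sym aK bK) xy).
Qed.

Lemma sum_dist (a b : T -> T) : involutive a -> involutive b ->
  sumn (dist (pmf a) (pmf b)) = n.*2.
Proof.
move=> aK bK; rewrite /dist (perm_sumn (permEl (perm_sort _ _))) sumnE big_map big_enum /=.
by rewrite -(card_partition (comps_part aK bK)) cardsT card_ord.
Qed.

Lemma dist_sizes (a b : T -> T) : involutive a -> involutive b -> (forall x, a x != x) -> (forall x, b x != x) ->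
  forall c, c \in dist (pmf a) (pmf b) -> exists2 k, 0 < k & c = k.*2.
Proof.
move=> aK bK afp bfp c; rewrite mem_sort => /mapP[C]; rewrite mem_enum => /imsetP[x _ ->] ->.
exists (order (rr a b) x); first exact: order_gt0.
exact: (cardS aK bK afp bfp).
Qed.

Lemma dist_parts (a b : T -> T) : involutive a -> involutive b -> (forall x, a x != x) -> (forall x, b x != x) ->
  exists2 tau, tau \in parts n & dbl tau = dist (pmf a) (pmf b).
Proof.
move=> aK bK afp bfp; apply: to_parts; last exact: dist_sizes.
  exact: (sort_sorted geq_total).
exact: sum_dist.
Qed.

Lemma dist_AA (a : T -> T) : involutive a -> (forall x, a x != x) -> dist (pmf a) (pmf a) = nseq n 2.
Proof.
move=> aK afp.
have all2 : all (pred1 2) (dist (pmf a) (pmf a)).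
  apply/allP=> c; rewrite mem_sort => /mapP[C]; rewrite mem_enum => /imsetP[x _ ->] -> /=.
  rewrite (cardS aK aK afp afp).
  have -> : order (rr a a) x = order id x.
    by apply: eq_card; apply: eq_fconnect => y; rewrite /rr aK.
  by rewrite order_id.
move/all_pred1P: (all2) => E; rewrite E.
have := sum_dist aK aK; rewrite E sumn_nseq.
set m := size _ => H.
have -> : m = n by apply: double_inj; rewrite -H -muln2 mulnC.
by rewrite size_nseq.
Qed.

End PMn.

Section Imatch.
Variable n : nat.
Hypothesis n0 : 0 < n.
Local Notation T := 'I_(n.*2).

Definition aIv (x : T) : nat := if x < n then x + n else x - n.
Lemma aI_lt (x : T) : aIv x < n.*2.
Proof. rewrite /aIv; have := ltn_ord x; case: ifP; lia. Qed.
Definition aI (x : T) : T := Ordinal (aI_lt x).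

Lemma aIE x : (aI x : nat) = if x < n then x + n else x - n.
Proof. by []. Qed.

Lemma aIK : involutive aI.
Proof.
move=> x; apply: val_inj => /=; rewrite /aIv aIE.
have := ltn_ord x; case: (ltnP x n) => h1; case: ifP; lia.
Qed.

Lemma aI_fp x : aI x != x.
Proof. apply/eqP=> /(congr1 val) /=; rewrite /aIv; case: ifP; lia. Qed.

Lemma Imatch_pmf : Imatch n = pmf aI.
Proof.
apply/setP=> X; rewrite inE; apply/existsP/imsetP.
  case=> x /existsP[y /andP[/eqP hy /eqP ->]]; exists x => //.
  have hy' : nat_of_ord y = nat_of_ord x + n := hy.
  congr [set x; _]; apply: val_inj => /=; rewrite /aIv hy'.
  have := ltn_ord y; rewrite hy' => h; rewrite ifT; lia.
case=> z _ ->; case: (ltnP z n) => h.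
  exists z; apply/existsP; exists (aI z); rewrite eqxx andbT /= /aIv ifT //.
exists (aI z); apply/existsP; exists z; rewrite setUC eqxx andbT /= /aIv ifF; last lia.
have := ltn_ord z; lia.
Qed.

Lemma Imatch_pm : is_pm (Imatch n).
Proof. rewrite Imatch_pmf; exact: (pmf_pm aIK aI_fp). Qed.

Lemma entry mu (A B : {set {set T}}) : is_pm A -> is_pm B ->
  exists2 tau, tau \in parts n & (dbl tau = dist A B /\ cnt mu A B = mcount n mu tau).
Proof.
move=> pA pB.
have [a [aK afp Ea]] := pm_inv pA.
have [b [bK bfp Eb]] := pm_inv pB.
have [tau tP dt] := dist_parts aK bK afp bfp.
rewrite -Ea -Eb in dt; exists tau => //; split => //.
rewrite /mcount; case: pickP => [A1 /andP[pA1 /eqP dA1] | none].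
  have [G [G1 G2]] := pm_trans pA pB Imatch_pm pA1 (etrans (esym dt) (esym dA1)).
  by rewrite -(cnt_mact mu G) G1 G2.
exfalso.
have dAA : dist A A = dist (Imatch n) (Imatch n).
  by rewrite Imatch_pmf Ea (dist_AA aK afp) (dist_AA aIK aI_fp).
have [G [G1 _]] := pm_trans pA pA Imatch_pm Imatch_pm dAA.
pose b0 x := G (b ((G^-1)%g x)).
have Gb : forall x, G (b x) = b0 (G x) by move=> x; rewrite /b0 permK.
have b0K : involutive b0 by move=> x; rewrite /b0 permK bK permKV.
have b0fp : forall x, b0 x != x.
  move=> x; rewrite /b0; apply: contra (bfp ((G^-1)%g x)) => /eqP E.
  by rewrite -(inj_eq (@perm_inj _ G)) E permKV.
have pb0 : is_pm (pmf b0) := pmf_pm b0K b0fp.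
have := none (mact G B); rewrite Eb (mact_pmf Gb) pb0 /=.
by rewrite -(mact_pmf Gb) -Eb -G1 dist_mact -dt eqxx.
Qed.

End Imatch.

Lemma sum_bool_card (U : finType) (P Q : pred U) :
  (\sum_(s | P s) (Q s : nat))%N = #|[set s | P s && Q s]|.
Proof.
rewrite -sum1_card big_mkcond [RHS]big_mkcond; apply: eq_bigr => s _.
by rewrite inE; case: (P s); case: (Q s).
Qed.

Local Open Scope ring_scope.

Theorem lemma3p2 (n : nat) (mu : seq nat) :
  (1 <= n)%N -> is_partition n.*2 mu ->
  forall W : 'M[algC]_(dimM n), irr_submod W ->
  forall (phi : algC) (theta : seq nat -> algC),
    (forall v : 'rV[algC]_(dimM n), (v <= W)%MS -> v *m classsum n mu = phi *: v) ->
    (forall tau, tau \in parts n ->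
       forall v : 'rV[algC]_(dimM n), (v <= W)%MS -> v *m Nop n tau = theta tau *: v) ->
    phi = \sum_(tau <- parts n) (mcount n mu tau)%:R * theta tau.
Proof.
move=> n0 _ W [W0 _] phi theta Hphi Htheta.
have Mid : classsum n mu = \sum_(tau <- parts n) (mcount n mu tau)%:R *: Nop n tau.
  apply/matrixP=> i j.
  set A := val (enum_val i); set B := val (enum_val j).
  have pA : is_pm A := valP _.
  have pB : is_pm B := valP _.
  have [tau0 tP [dt ct]] := entry n0 mu pA pB.
  rewrite /classsum !summxE.
  transitivity ((cnt mu A B)%:R : algC).
    rewrite (eq_bigr (fun s => (mact s A == B)%:R)); last by move=> s _; rewrite mxE.
    by rewrite -natr_sum sum_bool_card.
  rewrite (eq_big_seq (fun tau => (mcount n mu tau)%:R * (tau == tau0)%:R)); last first.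
    by move=> tau _; rewrite !mxE -/A -/B -dt (inj_eq dbl_inj) eq_sym.
  rewrite (bigD1_seq tau0) ?parts_uniq //= eqxx mulr1 big1_seq ?addr0 ?ct //.
  by move=> tau /andP[/negbTE -> _]; rewrite mulr0.
have [v vW v0] : exists2 v : 'rV[algC]_(dimM n), (v <= W)%MS & v != 0.
  have /existsP[i Hi] : [exists i, row i W != 0].
    apply: (contraNT _ W0) => /existsPn H; apply/eqP/row_matrixP => i.
    by rewrite row0; apply/eqP; move: (H i); rewrite negbK.
  by exists (row i W); first exact: row_sub.
have E1 := Hphi v vW; rewrite Mid mulmx_sumr in E1.
set s := \sum_(tau <- parts n) _.
have E2 : \sum_(tau <- parts n) v *m ((mcount n mu tau)%:R *: Nop n tau) = s *: v.
  rewrite /s scaler_suml; apply: eq_big_seq => tau tP.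
  by rewrite -scalemxAr Htheta // scalerA.
apply/eqP; rewrite -subr_eq0.
have : (phi - s) *: v = 0 by rewrite scalerBl -E1 E2 subrr.
by move/eqP; rewrite scaler_eq0 (negbTE v0) orbF.
Qed.
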